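(* Let $\varepsilon>0$, $\Omega\subset\mathbb{R}^2$ bounded open, $u\in\mathcal{SF}_\varepsilon(\Omega)$, $R\in\mathcal{R}_\varepsilon(u)$ and $T\in\mathcal{T}_\varepsilon$ with $T\subset R$. Then: (a) if $T$ has exactly one edge in $\mathcal{N}_\varepsilon(u)$, then $T$ contains at least one boundary edge of $R$; (b) if $T$ has exactly one edge in $\mathcal{N}_\varepsilon(u)$ and $u(\mathcal{L}_\varepsilon(R))$ contains four points, then $T$ contains two boundary edges of $R$.
   Context: $\mathcal{L}=\{ae_1+b\hat e_2:a,b\in\mathbb{Z}\}$ with $e_1=(1,0)$, $\hat e_2=\frac12(1,\sqrt3)$, $\mathcal{L}_\varepsilon=\varepsilon\mathcal{L}$, $\mathcal{L}_\varepsilon(R)=\mathcal{L}_\varepsilon\cap R$; $\mathcal{T}_\varepsilon$ is the set of closed triangles with vertices in $\mathcal{L}_\varepsilon$ pairwise at distance $\varepsilon$; $\mathcal{E}_\varepsilon$ the set of segments $[i,j]$, $i,j\in\mathcal{L}_\varepsilon$, $|i-j|=\varepsilon$. $n=(0,0,1)$; $\mathcal{SF}_\varepsilon(\Omega)$ is the set of $u:\mathcal{L}_\varepsilon\to\mathbb{S}^2$ with $u=n$ on $\mathcal{L}_\varepsilon\setminus\Omega$. $\mathcal{N}_\varepsilon(u)=\{[i,j]\in\mathcal{E}_\varepsilon:u(i)=-u(j)\}$, $\mathcal{C}_\varepsilon(u)=\mathcal{E}_\varepsilon\setminus\mathcal{N}_\varepsilon(u)$. Two triangles of $\mathcal{T}_\varepsilon$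 are neighbours if their intersection is an edge in $\mathcal{N}_\varepsilon(u)$, and connected if joined by a finite chain of consecutive neighbours. $\mathcal{R}_\varepsilon(u)$ is the set of admissible interpolation regions: unions of pairwise connected triangles of $\mathcal{T}_\varepsilon$ that are maximal with respect to inclusion. A boundary edge of $R$ is an edge $[i,j]\in\mathcal{C}_\varepsilon(u)$ which is the common edge of a triangle $T\subseteq R$ and a triangle $T'\in\mathcal{T}_\varepsilon$ with $T'\subseteq\mathbb{R}^2\setminus\mathrm{int}(R)$. *)

(* Defs.v *)
From Stdlib Require Import Reals ZArith Relations.
Open Scope R_scope.

Definition pt := (R * R)%type.
Definition vec3 := (R * R * R)%type.
Definition set2 := pt -> Prop.

Definition subset2 (A B : set2) : Prop := forall p, A p -> B p.

Definition dist2 (p q : pt) : R :=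
  sqrt ((fst p - fst q) ^ 2 + (snd p - snd q) ^ 2).

Definition open2 (O : set2) : Prop :=
  forall p, O p -> exists r, 0 < r /\ forall q, dist2 p q < r -> O q.

Definition bounded2 (O : set2) : Prop :=
  exists M, forall p, O p -> dist2 p (0, 0) <= M.

Definition interior2 (A : set2) : set2 :=
  fun p => exists r, 0 < r /\ forall q, dist2 p q < r -> A q.

(* L_eps = eps * { a e1 + b e2hat : a b in Z }, e1 = (1,0), e2hat = (1/2, sqrt3/2) *)
Definition lattice_pt (eps : R) (p : pt) : Prop :=
  exists a b : Z, p = (eps * (IZR a + IZR b / 2), eps * (IZR b * sqrt 3 / 2)).

Definition in_S2 (v : vec3) : Prop :=
  let '(x, y, z) := v in x ^ 2 + y ^ 2 + z ^ 2 = 1.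
Definition north : vec3 := (0, 0, 1).
Definition vneg (v : vec3) : vec3 := let '(x, y, z) := v in (- x, - y, - z).

(* SF_eps(Omega): u : L_eps -> S^2 (values of u off the lattice are irrelevant),
   u = n on L_eps \ Omega *)
Definition SF (eps : R) (Om : set2) (u : pt -> vec3) : Prop :=
  (forall i, lattice_pt eps i -> in_S2 (u i)) /\
  (forall i, lattice_pt eps i -> ~ Om i -> u i = north).

Definition seg (i j : pt) : set2 :=
  fun p => exists t, 0 <= t <= 1 /\
    p = ((1 - t) * fst i + t * fst j, (1 - t) * snd i + t * snd j).

Definition tri (i j k : pt) : set2 :=
  fun p => exists a b c, 0 <= a /\ 0 <= b /\ 0 <= c /\ a + b + c = 1 /\
    p = (a * fst i + b * fst j + c * fst k, a * snd i + b * snd j + c * snd k).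

Definition lat_pair (eps : R) (i j : pt) : Prop :=
  lattice_pt eps i /\ lattice_pt eps j /\ dist2 i j = eps.

Definition in_E (eps : R) (E : set2) : Prop :=
  exists i j, lat_pair eps i j /\ E = seg i j.

Definition in_T (eps : R) (T : set2) : Prop :=
  exists i j k, lat_pair eps i j /\ lat_pair eps j k /\ lat_pair eps i k /\
    T = tri i j k.

Definition side (E T : set2) : Prop :=
  exists i j k, T = tri i j k /\ E = seg i j.

Definition in_N (eps : R) (u : pt -> vec3) (E : set2) : Prop :=
  exists i j, lat_pair eps i j /\ E = seg i j /\ u i = vneg (u j).

Definition in_C (eps : R) (u : pt -> vec3) (E : set2) : Prop :=
  in_E eps E /\ ~ in_N eps u E.

Definition neighbours (eps : R) (u : pt -> vec3) (T1 T2 : set2) : Prop :=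
  in_T eps T1 /\ in_T eps T2 /\
  exists E, in_N eps u E /\ (fun p => T1 p /\ T2 p) = E.

Definition connected_tri (eps : R) (u : pt -> vec3) : set2 -> set2 -> Prop :=
  clos_refl_trans set2 (neighbours eps u).

Definition union_fam (F : set2 -> Prop) : set2 := fun p => exists T, F T /\ T p.

Definition pc_union (eps : R) (u : pt -> vec3) (Rg : set2) : Prop :=
  exists F : set2 -> Prop,
    (forall T, F T -> in_T eps T) /\
    (forall T1 T2, F T1 -> F T2 -> connected_tri eps u T1 T2) /\
    Rg = union_fam F.

Definition admissible_region (eps : R) (u : pt -> vec3) (Rg : set2) : Prop :=
  pc_union eps u Rg /\
  forall Rg', pc_union eps u Rg' -> subset2 Rg Rg' -> Rg' = Rg.

Definition boundary_edge (eps : R) (u : pt -> vec3) (Rg E : set2) : Prop :=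
  in_C eps u E /\
  exists T T', in_T eps T /\ subset2 T Rg /\ in_T eps T' /\
    subset2 T' (fun p => ~ interior2 Rg p) /\ side E T /\ side E T'.

Definition exactly_one_N (eps : R) (u : pt -> vec3) (T : set2) : Prop :=
  exists E, side E T /\ in_N eps u E /\
    forall E', side E' T -> in_N eps u E' -> E' = E.

Definition u_image (eps : R) (u : pt -> vec3) (Rg : set2) : vec3 -> Prop :=
  fun v => exists i, lattice_pt eps i /\ Rg i /\ v = u i.

Definition four_points (V : vec3 -> Prop) : Prop :=
  exists v1 v2 v3 v4,
    v1 <> v2 /\ v1 <> v3 /\ v1 <> v4 /\ v2 <> v3 /\ v2 <> v4 /\ v3 <> v4 /\
    forall v, V v <-> (v = v1 \/ v = v2 \/ v = v3 \/ v = v4).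

(* Main.v *)
Require Import Defs.
From Stdlib Require Import Reals ZArith Relations.
From Stdlib Require Import Arith Lia Lra Psatz Classical FunctionalExtensionality PropExtensionality.
Open Scope R_scope.

Close Scope R_scope.

Definition walk {V : Type} (nb : V -> V -> Prop) (w : nat -> V) (n : nat) : Prop :=
  forall k, k < n -> nb (w k) (w (S k)).
Definition W {V : Type} (nb : V -> V -> Prop) x y (w : nat -> V) n : Prop :=
  w 0 = x /\ w n = y /\ walk nb w n.
Definition deg1 {V : Type} (nb : V -> V -> Prop) (X : V) : Prop :=
  forall Y1 Y2, nb X Y1 -> nb X Y2 -> Y1 = Y2.

Lemma reach_walk {V} (nb : V -> V -> Prop) x y : clos_refl_trans V nb x y -> exists w n, W nb x y w n.
Proof.
  induction 1 as [x y H|x|x y z _ IH1 _ IH2].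
  - exists (fun k => match k with 0 => x | _ => y end), 1. repeat split; auto.
    intros k Hk. assert (k = 0) by lia. subst. auto.
  - exists (fun _ => x), 0. repeat split; auto. intros k Hk; lia.
  - unfold W in *. destruct IH1 as [w1 [n1 (A1 & B1 & C1)]]. destruct IH2 as [w2 [n2 (A2 & B2 & C2)]].
    exists (fun k => if k <=? n1 then w1 k else w2 (k - n1)), (n1 + n2). repeat split.
    + simpl. auto.
    + destruct (Nat.leb_spec (n1 + n2) n1).
      * assert (n2 = 0) by lia. subst. replace (n1 + 0) with n1 by lia. congruence.
      * replace (n1 + n2 - n1) with n2 by lia. auto.
    + intros k Hk. destruct (Nat.leb_spec k n1), (Nat.leb_spec (S k) n1).
      * apply C1. lia.
      * assert (k = n1) by lia. subst k. replace (S n1 - n1) with 1 by lia. rewrite B1, <- A2. apply C2. lia.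
      * lia.
      * replace (S k - n1) with (S (k - n1)) by lia. apply C2. lia.
Qed.

Lemma min_nat (P : nat -> Prop) n : P n -> exists m, P m /\ forall k, P k -> m <= k.
Proof.
  revert n. induction n as [n IH] using (well_founded_induction lt_wf). intros Hn.
  destruct (classic (exists k, k < n /\ P k)) as [[k [Hk Pk]]|Hno].
  - exact (IH k Hk Pk).
  - exists n. split; auto. intros k Pk. destruct (le_lt_dec n k); auto. exfalso. apply Hno; eauto.
Qed.

Definition SW {V : Type} (nb : V -> V -> Prop) x y w n : Prop :=
  W nb x y w n /\ forall w' m, W nb x y w' m -> n <= m.

Lemma shortest {V} (nb : V -> V -> Prop) x y : clos_refl_trans V nb x y -> exists w n, SW nb x y w n.
Proof.
  intros H. destruct (reach_walk nb x y H) as [w [n Hw]].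
  destruct (min_nat (fun n => exists w, W nb x y w n) n) as [m [[w' Hw'] Hm]]; eauto.
  exists w', m. split; auto. intros w'' m' H'. apply Hm. eauto.
Qed.

Lemma nobacktrack {V} (nb : V -> V -> Prop) x y w n : SW nb x y w n ->
  forall k, S k < n -> w k <> w (S (S k)).
Proof.
  intros [(A & B & C) Hmin] k Hk E.
  set (w' := fun j => if j <=? k then w j else w (S (S j))).
  assert (W nb x y w' (n - 2)).
  { unfold w'. repeat split.
    - simpl. auto.
    - destruct (Nat.leb_spec (n - 2) k).
      + assert (k = n - 2) by lia. subst k. rewrite E. replace (S (S (n - 2))) with n by lia. auto.
      + replace (S (S (n - 2))) with n by lia. auto.
    - intros j Hj. destruct (Nat.leb_spec j k), (Nat.leb_spec (S j) k).
      + apply C. lia.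
      + assert (j = k) by lia. subst j. rewrite E. apply C. lia.
      + lia.
      + apply C. lia. }
  specialize (Hmin _ _ H). lia.
Qed.

Lemma prefix {V} (nb : V -> V -> Prop) (Hsym : forall a b, nb a b -> nb b a)
  (Hdeg2 : forall X Y1 Y2 Y3, nb X Y1 -> nb X Y2 -> nb X Y3 -> Y1 = Y2 \/ Y1 = Y3 \/ Y2 = Y3)
  T X Y w n v m : deg1 nb T -> SW nb T X w n -> SW nb T Y v m ->
  forall k, k <= n -> k <= m -> w k = v k.
Proof.
  intros HT Hw Hv.
  assert (Hs : forall k, S k <= n -> S k <= m -> w k = v k /\ w (S k) = v (S k)).
  { induction k as [|k IH]; intros H1 H2.
    - destruct Hw as [(A & B & C) _], Hv as [(A' & B' & C') _].
      split; [congruence|]. apply (HT (w 1) (v 1)); [rewrite <- A; apply C; lia|rewrite <- A'; apply C'; lia].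
    - destruct IH as [E1 E2]; try lia. split; auto.
      pose proof (nobacktrack _ _ _ _ _ Hw k ltac:(lia)) as NB1.
      pose proof (nobacktrack _ _ _ _ _ Hv k ltac:(lia)) as NB2.
      destruct Hw as [(A & B & C) _], Hv as [(A' & B' & C') _].
      destruct (Hdeg2 (w (S k)) (w (S (S k))) (v (S (S k))) (w k)) as [?|[?|?]].
      + apply C; lia.
      + rewrite E2. apply C'; lia.
      + apply Hsym, C; lia.
      + auto.
      + exfalso; auto.
      + exfalso. apply NB2. congruence. }
  intros [|k] H1 H2.
  - destruct Hw as [(A & _) _], Hv as [(A' & _) _]. congruence.
  - apply Hs; lia.
Qed.

Lemma graph_three {V} (nb : V -> V -> Prop) (Hsym : forall a b, nb a b -> nb b a)
  (Hdeg2 : forall X Y1 Y2 Y3, nb X Y1 -> nb X Y2 -> nb X Y3 -> Y1 = Y2 \/ Y1 = Y3 \/ Y2 = Y3)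
  T X Y : deg1 nb T -> deg1 nb X -> deg1 nb Y -> T <> X -> T <> Y -> X <> Y ->
  clos_refl_trans V nb T X -> clos_refl_trans V nb T Y -> False.
Proof.
  intros HT HX HY N1 N2 N3 R1 R2.
  destruct (shortest nb _ _ R1) as [w [n Hw]]. destruct (shortest nb _ _ R2) as [v [m Hv]].
  assert (Hinner : forall X Y w n v m, deg1 nb X -> T <> X -> SW nb T X w n -> SW nb T Y v m -> n < m -> False).
  { clear -Hsym Hdeg2 HT. intros X Y w n v m HX NX Hw Hv Hlt.
    pose proof (prefix nb Hsym Hdeg2 T X Y w n v m HT Hw Hv n ltac:(lia) ltac:(lia)) as E.
    destruct n as [|n'].
    - destruct Hw as [(A & B & _) _]. congruence.
    - pose proof (nobacktrack _ _ _ _ _ Hv n' ltac:(lia)) as NB.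
      destruct Hw as [(A & B & C) _], Hv as [(A' & B' & C') _].
      apply NB. apply (HX (v n') (v (S (S n')))).
      + rewrite <- B, E. apply Hsym, C'. lia.
      + rewrite <- B, E. apply C'. lia. }
  destruct (lt_eq_lt_dec n m) as [[Hlt|Heq]|Hgt].
  - exact (Hinner X Y w n v m HX N1 Hw Hv Hlt).
  - subst m. apply N3. pose proof (prefix nb Hsym Hdeg2 T X Y w n v n HT Hw Hv n ltac:(lia) ltac:(lia)).
    destruct Hw as [(_ & B & _) _], Hv as [(_ & B' & _) _]. congruence.
  - exact (Hinner Y X v m w n HY N2 Hv Hw Hgt).
Qed.

Lemma reach_last {V} (nb : V -> V -> Prop) x y : clos_refl_trans V nb x y -> x = y \/ exists z, nb z y.
Proof.
  induction 1 as [x y H|x|x y z _ IH1 _ IH2]; eauto.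
  destruct IH2 as [<-|IH2]; auto.
Qed.

Open Scope R_scope.


Definition zp := (Z * Z)%type.
Definition uadj (z w : zp) : Prop :=
  (fst w = fst z + 1 /\ snd w = snd z)%Z \/ (fst w = fst z - 1 /\ snd w = snd z)%Z \/
  (fst w = fst z /\ snd w = snd z + 1)%Z \/ (fst w = fst z /\ snd w = snd z - 1)%Z \/
  (fst w = fst z + 1 /\ snd w = snd z - 1)%Z \/ (fst w = fst z - 1 /\ snd w = snd z + 1)%Z.
Definition unitTri (a b c : zp) := uadj a b /\ uadj b c /\ uadj a c.
Definition refl (a b c : zp) : zp := (fst a + fst b - fst c, snd a + snd b - snd c)%Z.

Lemma pe (a b c d : Z) : a = c -> b = d -> (a, b) = (c, d).
Proof. intros; subst; reflexivity. Qed.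
Lemma pne (a b c d : Z) : (a <> c \/ b <> d) -> (a, b) <> (c, d).
Proof. intros H E; injection E; intros; destruct H; auto. Qed.

Ltac zd := repeat match goal with p : zp |- _ => destruct p | p : (Z*Z)%type |- _ => destruct p end;
  unfold unitTri, uadj, refl in *; simpl in *.
Ltac prune := try (exfalso; match goal with H : (_ = _)%Z |- _ => clear - H; lia end).
Ltac dsplit := intros; repeat match goal with H : _ /\ _ |- _ => destruct H end;
  repeat (match goal with H : _ \/ _ |- _ => destruct H as [[? ?]|H] end; subst; prune);
  repeat match goal with H : _ /\ _ |- _ => destruct H end; subst; prune.
Ltac zz := zd; dsplit; try lia.

Lemma unit_sym z w : uadj z w -> uadj w z.
Proof. zz. Qed.
Lemma unit_neq z w : uadj z w -> z <> w.
Proof. zz; apply pne; lia. Qed.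

Lemma third a b c c' : unitTri a b c -> uadj a c' -> uadj b c' -> c' = c \/ c' = refl a b c.
Proof.
  destruct a as [a1 a2], b as [b1 b2], c as [c1 c2], c' as [d1 d2].
  unfold unitTri, uadj, refl; simpl. dsplit;
  try (left; apply pe; lia); try (right; apply pe; lia).
Qed.
Lemma xx : True. Proof. exact I. Qed.

Lemma refl_unit a b c : unitTri a b c -> unitTri a b (refl a b c).
Proof. zz. Qed.

Lemma refl_new a b c : unitTri a b c -> refl a b c <> a /\ refl a b c <> b /\ refl a b c <> c.
Proof. zz; repeat split; apply pne; lia. Qed.

Lemma refl_sym a b c : refl a b c = refl b a c.
Proof. zd; apply pe; lia. Qed.

Lemma refl_other p q r : unitTri p q r ->
  refl p r q <> q /\ refl p r q <> r /\ refl p r q <> refl q r p.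
Proof. zz; repeat split; apply pne; lia. Qed.

Definition isV (a b c w : zp) := w = a \/ w = b \/ w = c.
Definition canon (k : bool) (a b : Z) : zp * zp * zp :=
  if k then ((a,b),((a+1)%Z,b),(a,(b+1)%Z)) else (((a+1)%Z,b),(a,(b+1)%Z),((a+1)%Z,(b+1)%Z)).
Definition Perm3 (x y : zp * zp * zp) : Prop :=
  let '(a,b,c) := x in
  y = (a,b,c) \/ y = (b,a,c) \/ y = (a,c,b) \/ y = (b,c,a) \/ y = (c,a,b) \/ y = (c,b,a).


Lemma tpe (a1 a2 b1 b2 c1 c2 a1' a2' b1' b2' c1' c2' : Z) :
  a1 = a1' -> a2 = a2' -> b1 = b1' -> b2 = b2' -> c1 = c1' -> c2 = c2' ->
  ((a1,a2),(b1,b2),(c1,c2)) = ((a1',a2'),(b1',b2'),(c1',c2')).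
Proof. intros; subst; reflexivity. Qed.
Ltac sd := first [ apply tpe; lia | left; apply tpe; lia | right; sd ].

Lemma Cls z1 z2 z3 : unitTri z1 z2 z3 -> exists k a b, Perm3 (z1,z2,z3) (canon k a b).
Proof.
  destruct z1 as [a1 b1], z2 as [a2 b2], z3 as [a3 b3].
  intro H.
  cut (Perm3 (a1, b1, (a2, b2), (a3, b3)) (canon true (Z.min a1 (Z.min a2 a3)) (Z.min b1 (Z.min b2 b3))) \/
       Perm3 (a1, b1, (a2, b2), (a3, b3)) (canon false (Z.max a1 (Z.max a2 a3) - 1) (Z.max b1 (Z.max b2 b3) - 1))).
  { intros [H'|H']; eexists; eexists; eexists; exact H'. }
  revert H.
  unfold unitTri, uadj, Perm3, canon; simpl. dsplit;
  first [ left; sd | right; sd ].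
Qed.


Definition Lz (eps : R) (z : zp) : pt :=
  (eps * (IZR (fst z) + IZR (snd z) / 2), eps * (IZR (snd z) * sqrt 3 / 2)).
Definition P (eps s t : R) : pt := (eps * (s + t / 2), eps * (t * sqrt 3 / 2)).
Definition cs (eps : R) (p : pt) : R := fst p / eps - snd p / (eps * sqrt 3).
Definition ct (eps : R) (p : pt) : R := 2 * snd p / (eps * sqrt 3).

Lemma s3pos : 0 < sqrt 3. Proof. apply sqrt_lt_R0; lra. Qed.
Lemma s3sq : sqrt 3 * sqrt 3 = 3. Proof. apply sqrt_sqrt; lra. Qed.

Lemma cs_P eps s t : 0 < eps -> cs eps (P eps s t) = s.
Proof. intros. unfold cs, P; simpl. pose proof s3pos. field; lra. Qed.
Lemma ct_P eps s t : 0 < eps -> ct eps (P eps s t) = t.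
Proof. intros. unfold ct, P; simpl. pose proof s3pos. field; lra. Qed.
Lemma P_cs eps p : 0 < eps -> p = P eps (cs eps p) (ct eps p).
Proof. intros. destruct p as [x y]. unfold cs, ct, P; simpl. pose proof s3pos. pose proof s3sq.
  f_equal; field; lra.
Qed.

Lemma pt_eq eps p q : 0 < eps -> cs eps p = cs eps q -> ct eps p = ct eps q -> p = q.
Proof. intros He H1 H2. rewrite (P_cs eps p He), (P_cs eps q He), H1, H2. reflexivity. Qed.

Lemma cs_Lz eps z : 0 < eps -> cs eps (Lz eps z) = IZR (fst z).
Proof. intros; apply cs_P; auto. Qed.
Lemma ct_Lz eps z : 0 < eps -> ct eps (Lz eps z) = IZR (snd z).
Proof. intros; apply ct_P; auto. Qed.

Lemma cs_comb3 eps a b c x y w : 0 < eps ->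
  cs eps (a * fst x + b * fst y + c * fst w, a * snd x + b * snd y + c * snd w)
  = a * cs eps x + b * cs eps y + c * cs eps w.
Proof. intros. unfold cs; simpl. pose proof s3pos. field; lra. Qed.
Lemma ct_comb3 eps a b c x y w : 0 < eps ->
  ct eps (a * fst x + b * fst y + c * fst w, a * snd x + b * snd y + c * snd w)
  = a * ct eps x + b * ct eps y + c * ct eps w.
Proof. intros. unfold ct; simpl. pose proof s3pos. field; lra. Qed.
Lemma cs_comb2 eps t x y : 0 < eps ->
  cs eps ((1 - t) * fst x + t * fst y, (1 - t) * snd x + t * snd y)
  = (1 - t) * cs eps x + t * cs eps y.
Proof. intros. unfold cs; simpl. pose proof s3pos. field; lra. Qed.
Lemma ct_comb2 eps t x y : 0 < eps ->
  ct eps ((1 - t) * fst x + t * fst y, (1 - t) * snd x + t * snd y)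
  = (1 - t) * ct eps x + t * ct eps y.
Proof. intros. unfold ct; simpl. pose proof s3pos. field; lra. Qed.

Lemma tri_cs eps x y w p : 0 < eps ->
  (tri x y w p <-> exists a b c, 0 <= a /\ 0 <= b /\ 0 <= c /\ a + b + c = 1 /\
     cs eps p = a * cs eps x + b * cs eps y + c * cs eps w /\
     ct eps p = a * ct eps x + b * ct eps y + c * ct eps w).
Proof.
  intros He; split.
  - intros (a & b & c & Ha & Hb & Hc & Hs & ->). exists a, b, c.
    rewrite cs_comb3, ct_comb3 by auto. tauto.
  - intros (a & b & c & Ha & Hb & Hc & Hs & H1 & H2). exists a, b, c.
    repeat split; auto. apply (pt_eq eps); auto.
    rewrite cs_comb3 by auto; auto. rewrite ct_comb3 by auto; auto.
Qed.

Lemma set_ext (A B : set2) : (forall p, A p <-> B p) -> A = B.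
Proof.
  intros H. apply functional_extensionality.
  intros p. apply propositional_extensionality. apply H.
Qed.

Lemma tri_perm12 x y w : tri x y w = tri y x w.
Proof.
  apply set_ext; intros p; split; intros (a & b & c & Ha & Hb & Hc & Hs & ->);
  exists b, a, c; repeat split; try lra; f_equal; ring.
Qed.
Lemma tri_perm23 x y w : tri x y w = tri x w y.
Proof.
  apply set_ext; intros p; split; intros (a & b & c & Ha & Hb & Hc & Hs & ->);
  exists a, c, b; repeat split; try lra; f_equal; ring.
Qed.
Lemma seg_sym x y : seg x y = seg y x.
Proof.
  apply set_ext; intros p; split; intros (t & Ht & ->);
  exists (1 - t); repeat split; try lra; f_equal; ring.
Qed.
Lemma seg_in_tri x y w : subset2 (seg x y) (tri x y w).
Proof.
  intros p (t & Ht & ->). exists (1 - t), t, 0. repeat split; try lra; f_equal; ring.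
Qed.
Lemma tri_v1 x y w : tri x y w x.
Proof. exists 1, 0, 0. repeat split; try lra. destruct x; simpl; f_equal; ring. Qed.
Lemma tri_v2 x y w : tri x y w y.
Proof. exists 0, 1, 0. repeat split; try lra. destruct y; simpl; f_equal; ring. Qed.
Lemma tri_v3 x y w : tri x y w w.
Proof. exists 0, 0, 1. repeat split; try lra. destruct w; simpl; f_equal; ring. Qed.
Lemma seg_v1 x y : seg x y x.
Proof. exists 0. repeat split; try lra. destruct x; simpl; f_equal; ring. Qed.
Lemma seg_v2 x y : seg x y y.
Proof. exists 1. repeat split; try lra. destruct y; simpl; f_equal; ring. Qed.

Lemma lattice_Lz eps p : lattice_pt eps p <-> exists z, p = Lz eps z.
Proof.
  split.
  - intros (a & b & ->). exists (a, b). reflexivity.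
  - intros ([a b] & ->). exists a, b. reflexivity.
Qed.
Lemma lattice_Lz' eps z : lattice_pt eps (Lz eps z).
Proof. apply lattice_Lz; eauto. Qed.

Lemma Qcases x y : (x * x + x * y + y * y = 1)%Z ->
  (x = 1 /\ y = 0 \/ x = -1 /\ y = 0 \/ x = 0 /\ y = 1 \/ x = 0 /\ y = -1 \/
   x = 1 /\ y = -1 \/ x = -1 /\ y = 1)%Z.
Proof.
  intros H. assert (-1 <= y <= 1)%Z by nia. assert (-1 <= x <= 1)%Z by nia.
  assert (x = -1 \/ x = 0 \/ x = 1)%Z as Hx by lia.
  assert (y = -1 \/ y = 0 \/ y = 1)%Z as Hy by lia.
  destruct Hx as [ -> | [ -> | -> ] ]; destruct Hy as [ -> | [ -> | -> ] ]; simpl in H; lia.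
Qed.

Lemma dist_Lz eps z w : 0 < eps -> (dist2 (Lz eps z) (Lz eps w) = eps <-> uadj z w).
Proof.
  intros He. destruct z as [a1 b1], w as [a2 b2]. unfold dist2.
  assert (HX : (fst (Lz eps (a1, b1)) - fst (Lz eps (a2, b2))) ^ 2 + (snd (Lz eps (a1, b1)) - snd (Lz eps (a2, b2))) ^ 2
     = eps ^ 2 * IZR ((a2 - a1) * (a2 - a1) + (a2 - a1) * (b2 - b1) + (b2 - b1) * (b2 - b1))).
  { unfold Lz; simpl. rewrite !plus_IZR, !mult_IZR, !minus_IZR.
    pose proof s3sq. revert H. generalize (IZR a1) (IZR a2) (IZR b1) (IZR b2) (sqrt 3). intros a1' a2' b1' b2' s H.
    transitivity (eps^2 * ((a1' - a2')^2 + (a1' - a2') * (b1' - b2') + (b1' - b2')^2/4)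
       + eps^2 * (b1' - b2')^2 / 4 * (s * s)).
    { field. }
    rewrite H. field. }
  rewrite HX. unfold uadj; cbn [fst snd]. split.
  - intros Hs.
    assert (H0 : 0 <= eps ^ 2 * IZR ((a2 - a1) * (a2 - a1) + (a2 - a1) * (b2 - b1) + (b2 - b1) * (b2 - b1))).
    { rewrite <- HX. apply Rplus_le_le_0_compat; apply pow2_ge_0. }
    pose proof (sqrt_sqrt _ H0) as Hq. rewrite Hs in Hq.
    assert (Hq1 : IZR ((a2 - a1) * (a2 - a1) + (a2 - a1) * (b2 - b1) + (b2 - b1) * (b2 - b1)) = IZR 1).
    { apply (Rmult_eq_reg_l (eps ^ 2)); [|nra]. rewrite <- Hq. simpl. ring. }
    apply eq_IZR in Hq1. apply Qcases in Hq1. lia.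
  - intros Hu.
    assert (Hq : ((a2 - a1) * (a2 - a1) + (a2 - a1) * (b2 - b1) + (b2 - b1) * (b2 - b1) = 1)%Z).
    { destruct Hu as [[-> ->]|[[-> ->]|[[-> ->]|[[-> ->]|[[-> ->]|[-> ->]]]]]]; ring. }
    rewrite Hq. rewrite Rmult_1_r. apply sqrt_pow2. lra.
Qed.


Definition triZ eps (x : zp * zp * zp) : set2 :=
  let '(a, b, c) := x in tri (Lz eps a) (Lz eps b) (Lz eps c).
Definition isV3 (x : zp * zp * zp) w := let '(a, b, c) := x in isV a b c w.

Definition region (k : bool) (a b : Z) (s t : R) : Prop :=
  if k then IZR a <= s /\ IZR b <= t /\ s + t <= IZR a + IZR b + 1
  else s <= IZR a + 1 /\ t <= IZR b + 1 /\ IZR a + IZR b + 1 <= s + t.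
Definition sregion (k : bool) (a b : Z) (s t : R) : Prop :=
  if k then IZR a < s /\ IZR b < t /\ s + t < IZR a + IZR b + 1
  else s < IZR a + 1 /\ t < IZR b + 1 /\ IZR a + IZR b + 1 < s + t.

Lemma Perm3_tri eps x y : Perm3 x y -> triZ eps x = triZ eps y.
Proof.
  destruct x as [[a b] c]. simpl.
  intros [ -> | [ -> | [ -> | [ -> | [ -> | -> ] ] ] ] ]; simpl;
  repeat first [ reflexivity | rewrite tri_perm12; reflexivity | rewrite tri_perm23; reflexivity
    | rewrite tri_perm12, tri_perm23; reflexivity | rewrite tri_perm23, tri_perm12; reflexivity
    | rewrite tri_perm12, tri_perm23, tri_perm12; reflexivity ].
Qed.

Lemma Perm3_isV x y w : Perm3 x y -> (isV3 x w <-> isV3 y w).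
Proof.
  destruct x as [[a b] c]. simpl.
  intros [ -> | [ -> | [ -> | [ -> | [ -> | -> ] ] ] ] ]; cbv [isV3 isV]; tauto.
Qed.

Lemma tri_canon eps k a b p : 0 < eps ->
  (triZ eps (canon k a b) p <-> region k a b (cs eps p) (ct eps p)).
Proof.
  intros He. destruct k; cbv [canon triZ region]; rewrite tri_cs by exact He;
  rewrite !cs_Lz, !ct_Lz by auto; cbn [fst snd]; rewrite !plus_IZR;
  generalize (IZR a) (IZR b) (cs eps p) (ct eps p); intros A B s t; split.
  - intros (x & y & z & Hx & Hy & Hz & Hs & -> & ->).
    replace x with (1 - y - z) by lra. repeat split; nra.
  - intros (H1 & H2 & H3). exists (1 - (s - A) - (t - B)), (s - A), (t - B).
    repeat split; try lra; ring.
  - intros (x & y & z & Hx & Hy & Hz & Hs & -> & ->).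
    replace x with (1 - y - z) by lra. repeat split; nra.
  - intros (H1 & H2 & H3). exists (B + 1 - t), (A + 1 - s), (s + t - A - B - 1).
    repeat split; try lra; ring.
Qed.

Lemma lt1 (x y : Z) : IZR x < IZR y + 1 -> (x <= y)%Z.
Proof. intros H. assert (IZR x < IZR (y + 1)) by (rewrite plus_IZR; lra). apply lt_IZR in H0. lia. Qed.

Ltac zle x y := assert ((x <= y)%Z) by (apply lt1; rewrite ?plus_IZR; lra).
Ltac zlt x y := assert ((x < y)%Z) by (apply lt_IZR; rewrite ?plus_IZR; lra).
Ltac zlq x y := assert ((x <= y)%Z) by (apply le_IZR; rewrite ?plus_IZR; lra).

Lemma canon_F5 k a b c d : region k a b (IZR c) (IZR d) -> isV3 (canon k a b) (c, d).
Proof.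
  destruct k; cbv [region canon isV3 isV]; intros (H1 & H2 & H3).
  - zlq a c. zlq b d. zlq (c + d)%Z (a + b + 1)%Z.
    assert ((c = a /\ d = b) \/ (c = a + 1 /\ d = b) \/ (c = a /\ d = b + 1))%Z as HH by lia.
    destruct HH as [[-> ->]|[[-> ->]|[-> ->]]]; auto.
  - zlq c (a + 1)%Z. zlq d (b + 1)%Z. zlq (a + b + 1)%Z (c + d)%Z.
    assert ((c = a + 1 /\ d = b) \/ (c = a /\ d = b + 1) \/ (c = a + 1 /\ d = b + 1))%Z as HH by lia.
    destruct HH as [[-> ->]|[[-> ->]|[-> ->]]]; auto.
Qed.

Lemma canon_F9 k a b k' a' b' s t : sregion k a b s t -> region k' a' b' s t ->
  k' = k /\ a' = a /\ b' = b.
Proof.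
  destruct k, k'; cbv [region sregion]; intros (H1 & H2 & H3) (H4 & H5 & H6).
  - zle a' a. zle b' b. zle (a + b)%Z (a' + b')%Z. repeat split; lia.
  - exfalso. zle a a'. zle b b'. zlt (a' + b')%Z (a + b)%Z. lia.
  - exfalso. zle a' a. zle b' b. zlt (a + b)%Z (a' + b')%Z. lia.
  - zle a' a. zle b' b. zle (a + b)%Z (a' + b')%Z. repeat split; lia.
Qed.

Lemma sregion_region k a b s t : sregion k a b s t -> region k a b s t.
Proof. destruct k; cbv [region sregion]; lra. Qed.

Lemma small_delta K r : 0 <= K -> 0 < r -> exists d, 0 < d <= 1/2 /\ d ^ 2 * K < r ^ 2.
Proof.
  intros HK Hr. set (m := r / (2 * (K + 1))).
  assert (Hm : 0 < m) by (unfold m; apply Rdiv_lt_0_compat; lra).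
  assert (Hm2 : m * (K + 1) = r / 2) by (unfold m; field; lra).
  exists (Rmin (1/2) m).
  assert (0 < Rmin (1/2) m) by (apply Rmin_glb_lt; lra).
  assert (Rmin (1/2) m <= 1/2) by apply Rmin_l.
  assert (Rmin (1/2) m <= m) by apply Rmin_r.
  set (d := Rmin (1/2) m) in *.
  split; [lra|].
  assert (d * (K + 1) <= r / 2) by nra.
  assert (d ^ 2 * K <= (d * (K + 1)) ^ 2) by nra.
  assert ((d * (K + 1)) ^ 2 <= (r / 2) ^ 2) by (apply pow_incr; nra).
  nra.
Qed.

Lemma canon_int eps k a b s t r : 0 < eps -> region k a b s t -> 0 < r ->
  exists s' t', dist2 (P eps s t) (P eps s' t') < r /\ sregion k a b s' t'.
Proof.
  intros He Hreg Hr.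
  set (gs := if k then IZR a + 1/3 else IZR a + 2/3).
  set (gt := if k then IZR b + 1/3 else IZR b + 2/3).
  set (K := (eps * ((gs - s) + (gt - t) / 2)) ^ 2 + (eps * ((gt - t) * sqrt 3 / 2)) ^ 2).
  assert (HK : 0 <= K) by (unfold K; apply Rplus_le_le_0_compat; apply pow2_ge_0).
  destruct (small_delta K r HK Hr) as (d & Hd & HdK).
  exists (s + d * (gs - s)), (t + d * (gt - t)). split.
  - unfold dist2, P; cbn [fst snd].
    replace ((eps * (s + t / 2) - eps * (s + d * (gs - s) + (t + d * (gt - t)) / 2)) ^ 2 +
      (eps * (t * sqrt 3 / 2) - eps * ((t + d * (gt - t)) * sqrt 3 / 2)) ^ 2) with (d ^ 2 * K)
      by (unfold K; field).
    assert (sqrt (d ^ 2 * K) < sqrt (r ^ 2)) by (apply sqrt_lt_1_alt; split; [nra|auto]).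
    rewrite sqrt_pow2 in H by lra. exact H.
  - destruct k; unfold gs, gt; cbv [region sregion] in *; destruct Hreg as (H1 & H2 & H3);
    repeat split; nra.
Qed.


Lemma latpair_mk eps a b : 0 < eps -> uadj a b -> lat_pair eps (Lz eps a) (Lz eps b).
Proof. intros He H. split; [apply lattice_Lz'|split; [apply lattice_Lz'|]]. apply (proj2 (dist_Lz eps a b He)); auto. Qed.

Lemma latpair_conv eps i j : 0 < eps -> lat_pair eps i j ->
  exists a b, i = Lz eps a /\ j = Lz eps b /\ uadj a b.
Proof.
  intros He (Hi & Hj & Hd). apply lattice_Lz in Hi as [a ->]. apply lattice_Lz in Hj as [b ->].
  exists a, b. repeat split; auto. apply (proj1 (dist_Lz eps a b He)); auto.
Qed.

Lemma inT_conv eps X : 0 < eps -> in_T eps X ->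
  exists y1 y2 y3, unitTri y1 y2 y3 /\ X = tri (Lz eps y1) (Lz eps y2) (Lz eps y3).
Proof.
  intros He (i & j & k & H1 & H2 & H3 & ->).
  destruct (latpair_conv eps i j He H1) as (a & b & -> & -> & Hab).
  destruct H2 as (_ & Hk & H2). apply lattice_Lz in Hk as [c ->].
  destruct H3 as (_ & _ & H3).
  exists a, b, c. repeat split; auto; [apply (proj1 (dist_Lz eps b c He)) | apply (proj1 (dist_Lz eps a c He))]; auto.
Qed.

Lemma inT_mk eps y1 y2 y3 : 0 < eps -> unitTri y1 y2 y3 ->
  in_T eps (tri (Lz eps y1) (Lz eps y2) (Lz eps y3)).
Proof.
  intros He (H1 & H2 & H3). exists (Lz eps y1), (Lz eps y2), (Lz eps y3).
  split; [apply latpair_mk; auto|split; [apply latpair_mk; auto|split; [apply latpair_mk; auto|reflexivity]]].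
Qed.

Lemma F5 eps y1 y2 y3 w : 0 < eps -> unitTri y1 y2 y3 ->
  tri (Lz eps y1) (Lz eps y2) (Lz eps y3) (Lz eps w) -> isV y1 y2 y3 w.
Proof.
  intros He Hu Hw. destruct (Cls _ _ _ Hu) as (k & a & b & Hp).
  change (triZ eps (y1, y2, y3) (Lz eps w)) in Hw.
  rewrite (Perm3_tri eps _ _ Hp) in Hw. apply tri_canon in Hw; auto.
  rewrite cs_Lz, ct_Lz in Hw by auto. destruct w as [c d].
  apply canon_F5 in Hw. apply (Perm3_isV _ _ _ Hp) in Hw. exact Hw.
Qed.

Lemma interior eps y1 y2 y3 p r : 0 < eps -> unitTri y1 y2 y3 ->
  tri (Lz eps y1) (Lz eps y2) (Lz eps y3) p -> 0 < r ->
  exists q, dist2 p q < r /\ tri (Lz eps y1) (Lz eps y2) (Lz eps y3) q /\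
    forall X, in_T eps X -> X q -> X = tri (Lz eps y1) (Lz eps y2) (Lz eps y3).
Proof.
  intros He Hu Hp Hr. destruct (Cls _ _ _ Hu) as (k & a & b & Hpm).
  change (tri (Lz eps y1) (Lz eps y2) (Lz eps y3)) with (triZ eps (y1, y2, y3)) in *.
  rewrite (Perm3_tri eps _ _ Hpm) in *. apply tri_canon in Hp; auto.
  destruct (canon_int eps k a b _ _ r He Hp Hr) as (s' & t' & Hd & Hs).
  exists (P eps s' t'). split; [|split].
  - rewrite (P_cs eps p He). exact Hd.
  - apply tri_canon; auto. rewrite cs_P, ct_P by auto. apply sregion_region; auto.
  - intros X HX Hq. destruct (inT_conv eps X He HX) as (z1 & z2 & z3 & Hz & ->).
    destruct (Cls _ _ _ Hz) as (k' & a' & b' & Hpm').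
    change (tri (Lz eps z1) (Lz eps z2) (Lz eps z3)) with (triZ eps (z1, z2, z3)) in *.
    rewrite (Perm3_tri eps _ _ Hpm') in *. apply tri_canon in Hq; auto.
    rewrite cs_P, ct_P in Hq by auto.
    destruct (canon_F9 _ _ _ _ _ _ _ _ Hs Hq) as (-> & -> & ->). reflexivity.
Qed.

Lemma vert_not_in_seg eps z1 z2 z3 : 0 < eps -> uadj z1 z2 -> uadj z1 z3 -> z2 <> z3 ->
  ~ seg (Lz eps z1) (Lz eps z2) (Lz eps z3).
Proof.
  intros He H12 H13 Hne (t & Ht & E).
  assert (E1 := f_equal (cs eps) E). assert (E2 := f_equal (ct eps) E).
  rewrite cs_comb2, !cs_Lz in E1 by auto. rewrite ct_comb2, !ct_Lz in E2 by auto.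
  destruct z1 as [a b], z2 as [c d], z3 as [e f]. unfold uadj in *; cbn [fst snd] in *.
  destruct H12 as [[-> ->]|[[-> ->]|[[-> ->]|[[-> ->]|[[-> ->]|[-> ->]]]]]];
  destruct H13 as [[-> ->]|[[-> ->]|[[-> ->]|[[-> ->]|[[-> ->]|[-> ->]]]]]];
  try (apply Hne; reflexivity);
  repeat rewrite ?plus_IZR, ?minus_IZR in E1; repeat rewrite ?plus_IZR, ?minus_IZR in E2; clear E; revert E1 E2; generalize (IZR a) (IZR b); intros; nra.
Qed.


Definition Nn eps (u : pt -> vec3) a b := u (Lz eps a) = vneg (u (Lz eps b)).

Lemma vneg_inv v : vneg (vneg v) = v.
Proof. destruct v as [[x y] z]. simpl. rewrite !Ropp_involutive. reflexivity. Qed.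
Lemma Nn_sym eps u a b : Nn eps u a b -> Nn eps u b a.
Proof. unfold Nn. intros H. rewrite H, vneg_inv. reflexivity. Qed.
Lemma S2_neq v : in_S2 v -> v <> vneg v.
Proof.
  destruct v as [[x y] z]. simpl. intros H E. injection E. intros. 
  assert (x = 0) by lra. assert (y = 0) by lra. assert (z = 0) by lra. subst. lra.
Qed.
Lemma three_N eps u a b c : (forall z, in_S2 (u (Lz eps z))) ->
  Nn eps u a b -> Nn eps u a c -> Nn eps u b c -> False.
Proof.
  unfold Nn. intros HS H1 H2 H3. apply (S2_neq _ (HS c)).
  rewrite <- H3. rewrite H1 in H2. rewrite <- (vneg_inv (u (Lz eps b))), H2, vneg_inv. reflexivity.
Qed.

Lemma Perm3_unitTri x y : Perm3 x y -> let '(a, b, c) := x in let '(a', b', c') := y in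
  unitTri a b c -> unitTri a' b' c'.
Proof.
  destruct x as [[a b] c], y as [[a' b'] c']. simpl.
  intros [E|[E|[E|[E|[E|E]]]]]; injection E; intros; subst; unfold unitTri in *;
  intuition (auto using unit_sym).
Qed.

Lemma rearr w1 w2 w3 a b : isV w1 w2 w3 a -> isV w1 w2 w3 b -> a <> b ->
  exists c, Perm3 (w1, w2, w3) (a, b, c).
Proof.
  unfold isV, Perm3. intros [ -> | [ -> | -> ] ] [ -> | [ -> | -> ] ] Hne; try (exfalso; apply Hne; reflexivity);
  first [ exists w1; tauto | exists w2; tauto | exists w3; tauto ].
Qed.

Lemma nbr_sym eps u X Y : neighbours eps u X Y -> neighbours eps u Y X.
Proof.
  intros (HX & HY & E & HN & HE). split; auto. split; auto. exists E. split; auto.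
  rewrite <- HE. apply set_ext. intros p; tauto.
Qed.

Lemma nb_core eps a b c Y : 0 < eps -> unitTri a b c ->
  in_T eps Y -> Y (Lz eps a) -> Y (Lz eps b) ->
  (fun p => tri (Lz eps a) (Lz eps b) (Lz eps c) p /\ Y p) = seg (Lz eps a) (Lz eps b) ->
  Y = tri (Lz eps a) (Lz eps b) (Lz eps (refl a b c)).
Proof.
  intros He Hu HY Ha Hb HE.
  destruct (inT_conv eps Y He HY) as (w1 & w2 & w3 & Hw & ->).
  pose proof (F5 eps _ _ _ _ He Hw Ha) as Va. pose proof (F5 eps _ _ _ _ He Hw Hb) as Vb.
  destruct Hu as (Hab & Hbc & Hac).
  destruct (rearr _ _ _ _ _ Va Vb (unit_neq _ _ Hab)) as [c' Hp].
  pose proof (Perm3_unitTri _ _ Hp Hw) as Hu'. simpl in Hu'.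
  change (tri (Lz eps w1) (Lz eps w2) (Lz eps w3)) with (triZ eps (w1, w2, w3)) in *.
  rewrite (Perm3_tri eps _ _ Hp) in *. simpl in *.
  destruct Hu' as (_ & Hbc' & Hac').
  destruct (third a b c c' (conj Hab (conj Hbc Hac)) Hac' Hbc') as [->| ->]; auto.
  exfalso.
  assert (Hc : seg (Lz eps a) (Lz eps b) (Lz eps c)).
  { rewrite <- HE. split; apply tri_v3. }
  apply (vert_not_in_seg eps a b c He Hab Hac); auto.
  intros ->. apply (unit_neq _ _ Hbc). reflexivity.
Qed.

Ltac tperm := first [reflexivity | rewrite tri_perm12; reflexivity | rewrite tri_perm23; reflexivity
  | rewrite tri_perm12, tri_perm23; reflexivity | rewrite tri_perm23, tri_perm12; reflexivity
  | rewrite tri_perm12, tri_perm23, tri_perm12; reflexivity].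

Lemma nb_char eps u y1 y2 y3 X Y : 0 < eps -> unitTri y1 y2 y3 ->
  X = tri (Lz eps y1) (Lz eps y2) (Lz eps y3) -> neighbours eps u X Y ->
  (Nn eps u y1 y2 /\ Y = tri (Lz eps y1) (Lz eps y2) (Lz eps (refl y1 y2 y3))) \/
  (Nn eps u y1 y3 /\ Y = tri (Lz eps y1) (Lz eps y3) (Lz eps (refl y1 y3 y2))) \/
  (Nn eps u y2 y3 /\ Y = tri (Lz eps y2) (Lz eps y3) (Lz eps (refl y2 y3 y1))).
Proof.
  intros He Hu -> (HX & HY & E & (i & j & Hij & -> & Hn) & HE).
  destruct (latpair_conv eps i j He Hij) as (za & zb & -> & -> & Hab).
  assert (Ha : tri (Lz eps y1) (Lz eps y2) (Lz eps y3) (Lz eps za) /\ Y (Lz eps za)).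
  { change ((fun p => tri (Lz eps y1) (Lz eps y2) (Lz eps y3) p /\ Y p) (Lz eps za)). rewrite HE. apply seg_v1. }
  assert (Hb : tri (Lz eps y1) (Lz eps y2) (Lz eps y3) (Lz eps zb) /\ Y (Lz eps zb)).
  { change ((fun p => tri (Lz eps y1) (Lz eps y2) (Lz eps y3) p /\ Y p) (Lz eps zb)). rewrite HE. apply seg_v2. }
  pose proof (F5 eps _ _ _ _ He Hu (proj1 Ha)) as Va.
  pose proof (F5 eps _ _ _ _ He Hu (proj1 Hb)) as Vb.
  change (Nn eps u za zb) in Hn.
  destruct Hu as (H12 & H23 & H13).
  pose proof (unit_sym _ _ H12). pose proof (unit_sym _ _ H23). pose proof (unit_sym _ _ H13).
  destruct Va as [ -> | [ -> | -> ] ], Vb as [ -> | [ -> | -> ] ];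
  try (exfalso; apply (unit_neq _ _ Hab); reflexivity).
  - left. split; auto. apply (nb_core eps y1 y2 y3 Y); try split; try split; tauto.
  - right; left. split; auto.
    assert (Hx : tri (Lz eps y1) (Lz eps y2) (Lz eps y3) = tri (Lz eps y1) (Lz eps y3) (Lz eps y2)) by tperm.
    rewrite Hx in HE. apply (nb_core eps y1 y3 y2 Y); try split; try split; tauto.
  - left. split; [apply Nn_sym; auto|].
    assert (Hx : tri (Lz eps y1) (Lz eps y2) (Lz eps y3) = tri (Lz eps y2) (Lz eps y1) (Lz eps y3)) by tperm.
    rewrite Hx in HE. rewrite (nb_core eps y2 y1 y3 Y); try split; try split; try tauto.
    rewrite tri_perm12, refl_sym. reflexivity.
  - right; right. split; auto.
    assert (Hx : tri (Lz eps y1) (Lz eps y2) (Lz eps y3) = tri (Lz eps y2) (Lz eps y3) (Lz eps y1)) by tperm.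
    rewrite Hx in HE. apply (nb_core eps y2 y3 y1 Y); try split; try split; tauto.
  - right; left. split; [apply Nn_sym; auto|].
    assert (Hx : tri (Lz eps y1) (Lz eps y2) (Lz eps y3) = tri (Lz eps y3) (Lz eps y1) (Lz eps y2)) by tperm.
    rewrite Hx in HE. rewrite (nb_core eps y3 y1 y2 Y); try split; try split; try tauto.
    rewrite tri_perm12, refl_sym. reflexivity.
  - right; right. split; [apply Nn_sym; auto|].
    assert (Hx : tri (Lz eps y1) (Lz eps y2) (Lz eps y3) = tri (Lz eps y3) (Lz eps y2) (Lz eps y1)) by tperm.
    rewrite Hx in HE. rewrite (nb_core eps y3 y2 y1 Y); try split; try split; try tauto.
    rewrite tri_perm12, refl_sym. reflexivity.
Qed.

Lemma deg2_all eps u : 0 < eps -> (forall z, in_S2 (u (Lz eps z))) ->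
  forall X Y1 Y2 Y3, neighbours eps u X Y1 -> neighbours eps u X Y2 -> neighbours eps u X Y3 ->
  Y1 = Y2 \/ Y1 = Y3 \/ Y2 = Y3.
Proof.
  intros He HS X Y1 Y2 Y3 H1 H2 H3.
  destruct (inT_conv eps X He (proj1 H1)) as (y1 & y2 & y3 & Hu & HX).
  destruct (nb_char eps u _ _ _ _ _ He Hu HX H1) as [[N1 E1]|[[N1 E1]|[N1 E1]]];
  destruct (nb_char eps u _ _ _ _ _ He Hu HX H2) as [[N2 E2]|[[N2 E2]|[N2 E2]]];
  destruct (nb_char eps u _ _ _ _ _ He Hu HX H3) as [[N3 E3]|[[N3 E3]|[N3 E3]]];
  first [ left; congruence | right; left; congruence | right; right; congruence
        | exfalso; apply (three_N eps u y1 y2 y3 HS); assumption ].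
Qed.

Lemma deg1_of eps u y1 y2 y3 : 0 < eps -> unitTri y1 y2 y3 ->
  ~ (Nn eps u y1 y2 /\ Nn eps u y1 y3) -> ~ (Nn eps u y1 y2 /\ Nn eps u y2 y3) ->
  ~ (Nn eps u y1 y3 /\ Nn eps u y2 y3) ->
  deg1 (neighbours eps u) (tri (Lz eps y1) (Lz eps y2) (Lz eps y3)).
Proof.
  intros He Hu A1 A2 A3 Y1 Y2 H1 H2.
  destruct (nb_char eps u _ _ _ _ _ He Hu eq_refl H1) as [[N1 E1]|[[N1 E1]|[N1 E1]]];
  destruct (nb_char eps u _ _ _ _ _ He Hu eq_refl H2) as [[N2 E2]|[[N2 E2]|[N2 E2]]];
  first [ congruence | exfalso; tauto ].
Qed.


Lemma inF_gen eps (F : set2 -> Prop) Rg y1 y2 y3 p r : 0 < eps ->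
  (forall X, F X -> in_T eps X) -> Rg = union_fam F -> unitTri y1 y2 y3 ->
  tri (Lz eps y1) (Lz eps y2) (Lz eps y3) p -> 0 < r ->
  (forall q, dist2 p q < r -> tri (Lz eps y1) (Lz eps y2) (Lz eps y3) q -> Rg q) ->
  F (tri (Lz eps y1) (Lz eps y2) (Lz eps y3)).
Proof.
  intros He HF HRg Hu Hp Hr Hb.
  destruct (interior eps _ _ _ p r He Hu Hp Hr) as (q & Hd & Hq & Huq).
  specialize (Hb q Hd Hq). rewrite HRg in Hb. destruct Hb as (X & HX & HXq).
  rewrite <- (Huq X (HF X HX) HXq). exact HX.
Qed.

Lemma not_int eps (F : set2 -> Prop) Rg y1 y2 y3 : 0 < eps ->
  (forall X, F X -> in_T eps X) -> Rg = union_fam F -> unitTri y1 y2 y3 ->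
  ~ F (tri (Lz eps y1) (Lz eps y2) (Lz eps y3)) ->
  subset2 (tri (Lz eps y1) (Lz eps y2) (Lz eps y3)) (fun p => ~ interior2 Rg p).
Proof.
  intros He HF HRg Hu HnF p Hp (r & Hr & Hball). apply HnF.
  apply (inF_gen eps F Rg y1 y2 y3 p r); auto.
Qed.

Lemma edge_C eps u a b c : 0 < eps -> unitTri a b c -> ~ Nn eps u a b ->
  in_C eps u (seg (Lz eps a) (Lz eps b)).
Proof.
  intros He Hu Hn. split.
  - exists (Lz eps a), (Lz eps b). split; auto. apply latpair_mk; auto. apply Hu.
  - intros (i & j & Hij & HE & Hij'). destruct (latpair_conv eps i j He Hij) as (zi & zj & -> & -> & Hu').
    assert (Hi : seg (Lz eps a) (Lz eps b) (Lz eps zi)) by (rewrite HE; apply seg_v1).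
    assert (Hj : seg (Lz eps a) (Lz eps b) (Lz eps zj)) by (rewrite HE; apply seg_v2).
    pose proof (F5 eps a b c zi He Hu (seg_in_tri _ _ _ _ Hi)) as Vi.
    pose proof (F5 eps a b c zj He Hu (seg_in_tri _ _ _ _ Hj)) as Vj.
    destruct Hu as (Hab & Hbc & Hac).
    assert (Hc : ~ seg (Lz eps a) (Lz eps b) (Lz eps c)).
    { apply vert_not_in_seg; auto. intros ->. apply (unit_neq _ _ Hbc). reflexivity. }
    change (Nn eps u zi zj) in Hij'.
    destruct Vi as [ -> | [ -> | -> ] ], Vj as [ -> | [ -> | -> ] ];
    try (exfalso; apply (unit_neq _ _ Hu'); reflexivity); try contradiction.
    all: try (apply Hn; auto; fail). all: apply Hn, Nn_sym; auto.
Qed.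

Lemma bedge eps u (F : set2 -> Prop) Rg a b c : 0 < eps ->
  (forall X, F X -> in_T eps X) -> Rg = union_fam F -> unitTri a b c -> ~ Nn eps u a b ->
  subset2 (tri (Lz eps a) (Lz eps b) (Lz eps c)) Rg ->
  ~ F (tri (Lz eps a) (Lz eps b) (Lz eps (refl a b c))) ->
  boundary_edge eps u Rg (seg (Lz eps a) (Lz eps b)) /\
  subset2 (seg (Lz eps a) (Lz eps b)) (tri (Lz eps a) (Lz eps b) (Lz eps c)).
Proof.
  intros He HF HRg Hu Hn Hsub HnF. split; [|apply seg_in_tri].
  split; [apply (edge_C eps u a b c); auto|].
  exists (tri (Lz eps a) (Lz eps b) (Lz eps c)), (tri (Lz eps a) (Lz eps b) (Lz eps (refl a b c))).
  split; [apply inT_mk; auto|]. split; auto.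
  split; [apply inT_mk; auto; apply refl_unit; auto|].
  split; [apply (not_int eps F); auto; apply refl_unit; auto|].
  split; [exists (Lz eps a), (Lz eps b), (Lz eps c); auto|].
  exists (Lz eps a), (Lz eps b), (Lz eps (refl a b c)); auto.
Qed.

Lemma ut_231 a b c : unitTri a b c -> unitTri b c a.
Proof. unfold unitTri; intuition (auto using unit_sym). Qed.
Lemma ut_132 a b c : unitTri a b c -> unitTri a c b.
Proof. unfold unitTri; intuition (auto using unit_sym). Qed.
Lemma ut_213 a b c : unitTri a b c -> unitTri b a c.
Proof. unfold unitTri; intuition (auto using unit_sym). Qed.

Lemma setup eps u z1 z2 z3 : 0 < eps -> unitTri z1 z2 z3 ->
  exactly_one_N eps u (tri (Lz eps z1) (Lz eps z2) (Lz eps z3)) ->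
  exists p q r, unitTri p q r /\
    tri (Lz eps z1) (Lz eps z2) (Lz eps z3) = tri (Lz eps p) (Lz eps q) (Lz eps r) /\
    Nn eps u p q /\ ~ Nn eps u q r /\ ~ Nn eps u p r.
Proof.
  intros He Hu (E0 & (i' & j' & k' & HT' & HE0) & (a & b & Hab & HEab & Hn) & Huniq).
  destruct (latpair_conv eps a b He Hab) as (za & zb & -> & -> & Huab).
  assert (Ha : tri (Lz eps z1) (Lz eps z2) (Lz eps z3) (Lz eps za)).
  { rewrite HT'. apply seg_in_tri. rewrite <- HE0, HEab. apply seg_v1. }
  assert (Hb : tri (Lz eps z1) (Lz eps z2) (Lz eps z3) (Lz eps zb)).
  { rewrite HT'. apply seg_in_tri. rewrite <- HE0, HEab. apply seg_v2. }
  pose proof (F5 eps _ _ _ _ He Hu Ha) as Va. pose proof (F5 eps _ _ _ _ He Hu Hb) as Vb.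
  destruct (rearr _ _ _ _ _ Va Vb (unit_neq _ _ Huab)) as [c Hp].
  pose proof (Perm3_unitTri _ _ Hp Hu) as Hu'. simpl in Hu'.
  pose proof (Perm3_tri eps _ _ Hp) as Ht. simpl in Ht.
  exists za, zb, c. split; auto. split; auto. split; [exact Hn|].
  destruct Hu' as (H12 & H23 & H13).
  split.
  - intros Hn'. 
    assert (E' : seg (Lz eps zb) (Lz eps c) = E0).
    { apply Huniq.
      - exists (Lz eps zb), (Lz eps c), (Lz eps za). split; auto. rewrite Ht. tperm.
      - exists (Lz eps zb), (Lz eps c). split; [apply latpair_mk; auto|]. split; auto. }
    assert (Hc : seg (Lz eps za) (Lz eps zb) (Lz eps c)) by (rewrite <- HEab, <- E'; apply seg_v2).
    revert Hc. apply vert_not_in_seg; auto. intros ->. apply (unit_neq _ _ H23). reflexivity.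
  - intros Hn'.
    assert (E' : seg (Lz eps za) (Lz eps c) = E0).
    { apply Huniq.
      - exists (Lz eps za), (Lz eps c), (Lz eps zb). split; auto. rewrite Ht. tperm.
      - exists (Lz eps za), (Lz eps c). split; [apply latpair_mk; auto|]. split; auto. }
    assert (Hc : seg (Lz eps za) (Lz eps zb) (Lz eps c)) by (rewrite <- HEab, <- E'; apply seg_v2).
    revert Hc. apply vert_not_in_seg; auto. intros ->. apply (unit_neq _ _ H23). reflexivity.
Qed.


Lemma claimA eps u (F : set2 -> Prop) p q r : 0 < eps -> (forall z, in_S2 (u (Lz eps z))) ->
  (forall X Y, F X -> F Y -> connected_tri eps u X Y) -> unitTri p q r ->
  F (tri (Lz eps p) (Lz eps q) (Lz eps r)) ->
  Nn eps u p q -> ~ Nn eps u q r -> ~ Nn eps u p r ->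
  F (tri (Lz eps q) (Lz eps r) (Lz eps (refl q r p))) ->
  F (tri (Lz eps p) (Lz eps r) (Lz eps (refl p r q))) -> False.
Proof.
  intros He HS HF2 Hu FT Hpq Hqr Hpr FB FL.
  pose proof (ut_231 _ _ _ Hu) as Hu2. pose proof (ut_132 _ _ _ Hu) as Hu3.
  pose proof (refl_unit _ _ _ Hu2) as HuB. pose proof (refl_unit _ _ _ Hu3) as HuL.
  apply (graph_three (neighbours eps u) (nbr_sym eps u) (deg2_all eps u He HS)
    (tri (Lz eps p) (Lz eps q) (Lz eps r)) (tri (Lz eps q) (Lz eps r) (Lz eps (refl q r p)))
    (tri (Lz eps p) (Lz eps r) (Lz eps (refl p r q)))).
  - apply deg1_of; auto; tauto.
  - apply deg1_of; auto; try tauto.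
    intros [H1 H2]. apply Hpr. unfold Nn in *. rewrite Hpq, H1, H2. reflexivity.
  - apply deg1_of; auto; try tauto.
    intros [H1 H2]. apply Hqr. unfold Nn in *. rewrite (Nn_sym _ _ _ _ Hpq), H1, H2. reflexivity.
  - intros E. assert (Hs := tri_v3 (Lz eps q) (Lz eps r) (Lz eps (refl q r p))).
    rewrite <- E in Hs. apply (F5 eps _ _ _ _ He Hu) in Hs.
    destruct (refl_new _ _ _ Hu2) as (N1 & N2 & N3). unfold isV in Hs. tauto.
  - intros E. assert (Hs := tri_v3 (Lz eps p) (Lz eps r) (Lz eps (refl p r q))).
    rewrite <- E in Hs. apply (F5 eps _ _ _ _ He Hu) in Hs.
    destruct (refl_new _ _ _ Hu3) as (N1 & N2 & N3). unfold isV in Hs. tauto.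
  - intros E. assert (Hs := tri_v3 (Lz eps p) (Lz eps r) (Lz eps (refl p r q))).
    rewrite <- E in Hs. apply (F5 eps _ _ _ _ He HuB) in Hs.
    destruct (refl_other _ _ _ Hu) as (N1 & N2 & N3). unfold isV in Hs. tauto.
  - apply HF2; auto.
  - apply HF2; auto.
Qed.

Definition Jp eps (u : pt -> vec3) p q (X : set2) : Prop :=
  forall a b, X (Lz eps a) -> X (Lz eps b) -> uadj a b -> Nn eps u a b ->
    u (Lz eps a) = u (Lz eps p) \/ u (Lz eps a) = u (Lz eps q).

Lemma J_T eps u p q r : 0 < eps -> unitTri p q r -> ~ Nn eps u q r -> ~ Nn eps u p r ->
  Jp eps u p q (tri (Lz eps p) (Lz eps q) (Lz eps r)).
Proof.
  intros He Hu Hqr Hpr a b Ha Hb Hab Hn.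
  apply (F5 eps _ _ _ _ He Hu) in Ha. apply (F5 eps _ _ _ _ He Hu) in Hb.
  destruct Ha as [ -> | [ -> | -> ] ], Hb as [ -> | [ -> | -> ] ];
  first [ left; reflexivity | right; reflexivity | exfalso; apply (unit_neq _ _ Hab); reflexivity
        | exfalso; apply Hqr; apply Nn_sym; assumption | exfalso; apply Hpr; apply Nn_sym; assumption ].
Qed.

Lemma vneg_pq eps u p q : Nn eps u p q ->
  vneg (u (Lz eps p)) = u (Lz eps q) /\ vneg (u (Lz eps q)) = u (Lz eps p).
Proof. unfold Nn. intros H. rewrite H, vneg_inv. auto. Qed.

Lemma J_step eps u p q a b c : 0 < eps -> Nn eps u p q -> unitTri a b c ->
  Jp eps u p q (tri (Lz eps a) (Lz eps b) (Lz eps c)) -> Nn eps u a b ->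
  Jp eps u p q (tri (Lz eps a) (Lz eps b) (Lz eps (refl a b c))).
Proof.
  intros He Hpq Hu HJ Hab d e Hd He' Hde Hn.
  pose proof (refl_unit _ _ _ Hu) as Hu'.
  pose proof (HJ a b (tri_v1 _ _ _) (tri_v2 _ _ _) (proj1 Hu) Hab) as Ja.
  pose proof (HJ b a (tri_v2 _ _ _) (tri_v1 _ _ _) (unit_sym _ _ (proj1 Hu)) (Nn_sym _ _ _ _ Hab)) as Jb.
  apply (F5 eps _ _ _ _ He Hu') in Hd. apply (F5 eps _ _ _ _ He Hu') in He'.
  destruct (vneg_pq _ _ _ _ Hpq) as [V1 V2].
  destruct Hd as [ -> | [ -> | -> ] ]; auto.
  unfold Nn in Hn.
  destruct He' as [ -> | [ -> | -> ] ].
  - rewrite Hn. destruct Ja as [E|E]; rewrite E; auto.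
  - rewrite Hn. destruct Jb as [E|E]; rewrite E; auto.
  - exfalso. apply (unit_neq _ _ Hde). reflexivity.
Qed.

Lemma J_nb eps u p q X Y : 0 < eps -> Nn eps u p q -> Jp eps u p q X ->
  neighbours eps u X Y -> Jp eps u p q Y.
Proof.
  intros He Hpq HJ HN.
  destruct (inT_conv eps X He (proj1 HN)) as (y1 & y2 & y3 & Hu & HX).
  destruct (nb_char eps u _ _ _ _ _ He Hu HX HN) as [[N1 ->]|[[N1 ->]|[N1 ->]]]; subst X.
  - apply J_step; auto.
  - apply J_step; auto. apply ut_132; auto. rewrite <- tri_perm23. auto.
  - apply J_step; auto. apply ut_231; auto.
    replace (tri (Lz eps y2) (Lz eps y3) (Lz eps y1)) with (tri (Lz eps y1) (Lz eps y2) (Lz eps y3)) by tperm.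
    auto.
Qed.

Lemma J_reach eps u p q X Y : 0 < eps -> Nn eps u p q -> connected_tri eps u X Y ->
  Jp eps u p q X -> Jp eps u p q Y.
Proof.
  intros He Hpq R. induction R; auto. intros; eapply J_nb; eauto.
Qed.

Lemma Jall eps u p q y1 y2 y3 : Jp eps u p q (tri (Lz eps y1) (Lz eps y2) (Lz eps y3)) ->
  unitTri y1 y2 y3 ->
  (Nn eps u y1 y2 /\ Nn eps u y1 y3 \/ Nn eps u y1 y2 /\ Nn eps u y2 y3 \/ Nn eps u y1 y3 /\ Nn eps u y2 y3) ->
  forall w, isV y1 y2 y3 w -> u (Lz eps w) = u (Lz eps p) \/ u (Lz eps w) = u (Lz eps q).
Proof.
  intros HJ (H12 & H23 & H13) HN w Hw.
  pose proof (unit_sym _ _ H12). pose proof (unit_sym _ _ H23). pose proof (unit_sym _ _ H13).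
  destruct HN as [[A B]|[[A B]|[A B]]]; pose proof (Nn_sym _ _ _ _ A); pose proof (Nn_sym _ _ _ _ B);
  destruct Hw as [ -> | [ -> | -> ] ];
  first [ apply (HJ _ _ (tri_v1 _ _ _) (tri_v2 _ _ _)); solve [auto]
        | apply (HJ _ _ (tri_v1 _ _ _) (tri_v3 _ _ _)); solve [auto]
        | apply (HJ _ _ (tri_v2 _ _ _) (tri_v1 _ _ _)); solve [auto]
        | apply (HJ _ _ (tri_v2 _ _ _) (tri_v3 _ _ _)); solve [auto]
        | apply (HJ _ _ (tri_v3 _ _ _) (tri_v1 _ _ _)); solve [auto]
        | apply (HJ _ _ (tri_v3 _ _ _) (tri_v2 _ _ _)); solve [auto] ].
Qed.

Lemma basicsB eps u p q r : 0 < eps -> unitTri p q r ->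
  Nn eps u p q -> ~ Nn eps u q r -> ~ Nn eps u p r ->
  deg1 (neighbours eps u) (tri (Lz eps p) (Lz eps q) (Lz eps r)) /\
  deg1 (neighbours eps u) (tri (Lz eps q) (Lz eps r) (Lz eps (refl q r p))) /\
  tri (Lz eps p) (Lz eps q) (Lz eps r) <> tri (Lz eps q) (Lz eps r) (Lz eps (refl q r p)).
Proof.
  intros He Hu Hpq Hqr Hpr.
  pose proof (ut_231 _ _ _ Hu) as Hu2. pose proof (refl_unit _ _ _ Hu2) as HuB.
  split; [|split].
  - apply deg1_of; auto; tauto.
  - apply deg1_of; auto; try tauto.
    intros [H1 H2]. apply Hpr. unfold Nn in *. rewrite Hpq, H1, H2. reflexivity.
  - intros E. assert (Hs := tri_v3 (Lz eps q) (Lz eps r) (Lz eps (refl q r p))).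
    rewrite <- E in Hs. apply (F5 eps _ _ _ _ He Hu) in Hs.
    destruct (refl_new _ _ _ Hu2) as (N1 & N2 & N3). unfold isV in Hs. tauto.
Qed.

Lemma claimB eps u (F : set2 -> Prop) Rg p q r : 0 < eps -> (forall z, in_S2 (u (Lz eps z))) ->
  (forall X, F X -> in_T eps X) ->
  (forall X Y, F X -> F Y -> connected_tri eps u X Y) -> Rg = union_fam F -> unitTri p q r ->
  F (tri (Lz eps p) (Lz eps q) (Lz eps r)) ->
  Nn eps u p q -> ~ Nn eps u q r -> ~ Nn eps u p r ->
  F (tri (Lz eps q) (Lz eps r) (Lz eps (refl q r p))) ->
  four_points (u_image eps u Rg) -> False.
Proof.
  intros He HS HF1 HF2 HRg Hu FT Hpq Hqr Hpr FB H4.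
  set (T := tri (Lz eps p) (Lz eps q) (Lz eps r)) in *.
  set (B := tri (Lz eps q) (Lz eps r) (Lz eps (refl q r p))) in *.
  pose proof (ut_231 _ _ _ Hu) as Hu2. pose proof (refl_unit _ _ _ Hu2) as HuB.
  destruct (basicsB eps u p q r He Hu Hpq Hqr Hpr) as (D1 & D2 & NTB). fold T B in D1, D2, NTB.
  assert (HJ : forall X, F X -> Jp eps u p q X).
  { intros X FX. apply (J_reach eps u p q T X He Hpq (HF2 T X FT FX)). apply J_T; auto. }
  destruct (vneg_pq _ _ _ _ Hpq) as [V1 V2].
  assert (Hval : forall X, F X -> forall w, X (Lz eps w) ->
     u (Lz eps w) = u (Lz eps p) \/ u (Lz eps w) = u (Lz eps q) \/ u (Lz eps w) = u (Lz eps r)).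
  { intros X FX w Hw.
    destruct (classic (X = T)) as [->|NT].
    { apply (F5 eps _ _ _ _ He Hu) in Hw. destruct Hw as [ -> | [ -> | -> ] ]; auto. }
    destruct (classic (X = B)) as [->|NB].
    { apply (F5 eps _ _ _ _ He HuB) in Hw. destruct Hw as [ -> | [ -> | -> ] ]; auto.
      left.
      destruct (reach_last _ _ _ (HF2 T B FT FB)) as [E|[Z HZ]]; [contradiction|].
      apply nbr_sym in HZ.
      destruct (nb_char eps u _ _ _ _ _ He HuB eq_refl HZ) as [[N1 _]|[[N1 _]|[N1 _]]].
      - contradiction.
      - unfold Nn in N1. rewrite <- V2, N1, vneg_inv. reflexivity.
      - exfalso. destruct (HJ B FB r (refl q r p) (tri_v2 _ _ _) (tri_v3 _ _ _) (proj1 (proj2 HuB)) N1) as [E|E].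
        + apply Hqr. unfold Nn. rewrite E, V1. reflexivity.
        + apply Hpr. unfold Nn. rewrite E. exact Hpq. }
    destruct (inT_conv eps X He (HF1 X FX)) as (y1 & y2 & y3 & Hy & ->).
    pose proof (F5 eps _ _ _ _ He Hy Hw) as Vw.
    destruct (classic (Nn eps u y1 y2 /\ Nn eps u y1 y3 \/ Nn eps u y1 y2 /\ Nn eps u y2 y3 \/
                       Nn eps u y1 y3 /\ Nn eps u y2 y3)) as [H2|H2].
    - destruct (Jall eps u p q y1 y2 y3 (HJ _ FX) Hy H2 w Vw); auto.
    - exfalso.
      assert (D3 : deg1 (neighbours eps u) (tri (Lz eps y1) (Lz eps y2) (Lz eps y3))) by (apply deg1_of; auto; tauto).
      apply (graph_three (neighbours eps u) (nbr_sym eps u) (deg2_all eps u He HS) T B _ D1 D2 D3);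
        auto; apply HF2; auto. }
  destruct H4 as (v1 & v2 & v3 & v4 & n12 & n13 & n14 & n23 & n24 & n34 & Hiff).
  assert (Himg : forall v, u_image eps u Rg v ->
     v = u (Lz eps p) \/ v = u (Lz eps q) \/ v = u (Lz eps r)).
  { intros v (i & Hi & HRi & ->). apply lattice_Lz in Hi as [w ->].
    rewrite HRg in HRi. destruct HRi as (X & FX & HX). eapply Hval; eauto. }
  pose proof (Himg v1 (proj2 (Hiff v1) (or_introl eq_refl))) as W1.
  pose proof (Himg v2 (proj2 (Hiff v2) (or_intror (or_introl eq_refl)))) as W2.
  pose proof (Himg v3 (proj2 (Hiff v3) (or_intror (or_intror (or_introl eq_refl))))) as W3.
  pose proof (Himg v4 (proj2 (Hiff v4) (or_intror (or_intror (or_intror eq_refl))))) as W4.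
  destruct W1 as [ -> | [ -> | -> ] ], W2 as [ -> | [ -> | -> ] ], W3 as [ -> | [ -> | -> ] ],
    W4 as [ -> | [ -> | -> ] ]; congruence.
Qed.


Theorem lemma5p4 (eps : R) (Om : set2) (u : pt -> vec3) (Rg T : set2) :
  0 < eps -> bounded2 Om -> open2 Om -> SF eps Om u ->
  admissible_region eps u Rg -> in_T eps T -> subset2 T Rg ->
  (exactly_one_N eps u T ->
     exists E, boundary_edge eps u Rg E /\ subset2 E T) /\
  (exactly_one_N eps u T -> four_points (u_image eps u Rg) ->
     exists E1 E2, E1 <> E2 /\
       boundary_edge eps u Rg E1 /\ subset2 E1 T /\
       boundary_edge eps u Rg E2 /\ subset2 E2 T).
Proof.
  intros He _ _ [HSa _] [(F & HF1 & HF2 & HRg) _] HT HTR.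
  assert (HS : forall z, in_S2 (u (Lz eps z))) by (intros z; apply HSa, lattice_Lz').
  destruct (inT_conv eps T He HT) as (z1 & z2 & z3 & Hu & ->).
  assert (FT : F (tri (Lz eps z1) (Lz eps z2) (Lz eps z3))).
  { apply (inF_gen eps F Rg z1 z2 z3 (Lz eps z1) 1); auto.
    - apply tri_v1.
    - lra. }
  split.
  - intros H1. destruct (setup eps u z1 z2 z3 He Hu H1) as (p & q & r & Hu' & Ht & Hpq & Hqr & Hpr).
    rewrite Ht in HTR, FT |- *.
    assert (E1 : tri (Lz eps p) (Lz eps q) (Lz eps r) = tri (Lz eps q) (Lz eps r) (Lz eps p)) by tperm.
    assert (E2 : tri (Lz eps p) (Lz eps q) (Lz eps r) = tri (Lz eps p) (Lz eps r) (Lz eps q)) by tperm.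
    destruct (classic (F (tri (Lz eps q) (Lz eps r) (Lz eps (refl q r p))))) as [FB|NFB].
    + assert (NFL : ~ F (tri (Lz eps p) (Lz eps r) (Lz eps (refl p r q)))).
      { intros FL. apply (claimA eps u F p q r); auto. }
      rewrite E2 in HTR. rewrite E2.
      destruct (bedge eps u F Rg p r q He HF1 HRg (ut_132 _ _ _ Hu') Hpr HTR NFL) as [Hb Hs].
      exists (seg (Lz eps p) (Lz eps r)); auto.
    + rewrite E1 in HTR. rewrite E1.
      destruct (bedge eps u F Rg q r p He HF1 HRg (ut_231 _ _ _ Hu') Hqr HTR NFB) as [Hb Hs].
      exists (seg (Lz eps q) (Lz eps r)); auto.
  - intros H1 H4. destruct (setup eps u z1 z2 z3 He Hu H1) as (p & q & r & Hu' & Ht & Hpq & Hqr & Hpr).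
    rewrite Ht in HTR, FT |- *.
    assert (E1 : tri (Lz eps p) (Lz eps q) (Lz eps r) = tri (Lz eps q) (Lz eps r) (Lz eps p)) by tperm.
    assert (E2 : tri (Lz eps p) (Lz eps q) (Lz eps r) = tri (Lz eps p) (Lz eps r) (Lz eps q)) by tperm.
    assert (E3 : tri (Lz eps p) (Lz eps q) (Lz eps r) = tri (Lz eps q) (Lz eps p) (Lz eps r)) by tperm.
    assert (NFB : ~ F (tri (Lz eps q) (Lz eps r) (Lz eps (refl q r p)))).
    { intros FB. apply (claimB eps u F Rg p q r); auto. }
    assert (NFL : ~ F (tri (Lz eps p) (Lz eps r) (Lz eps (refl p r q)))).
    { intros FL. apply (claimB eps u F Rg q p r); auto.
      - apply ut_213; auto.
      - rewrite <- E3; auto.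
      - apply Nn_sym; auto. }
    destruct (bedge eps u F Rg p r q He HF1 HRg (ut_132 _ _ _ Hu') Hpr ltac:(rewrite <- E2; auto) NFL) as [HbL HsL].
    destruct (bedge eps u F Rg q r p He HF1 HRg (ut_231 _ _ _ Hu') Hqr ltac:(rewrite <- E1; auto) NFB) as [HbB HsB].
    exists (seg (Lz eps q) (Lz eps r)), (seg (Lz eps p) (Lz eps r)).
    split; [|split; [auto|split; [rewrite E1; auto|split; [auto|rewrite E2; auto]]]].
    intros E. assert (Hp := seg_v1 (Lz eps p) (Lz eps r)). rewrite <- E in Hp.
    destruct Hu' as (H12 & H23 & H13).
    apply (vert_not_in_seg eps q r p He H23 (unit_sym _ _ H12)); auto.
    intros Er. subst r. apply (unit_neq _ _ H13). reflexivity.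
Qed.
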